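(* Let $T$ be an ergodic measure-preserving transformation of a Lebesgue probability space $(X,\mathcal B,\mu)$ and let $g\in L^1(X,\mu)$. Then for $\mu$-a.e. $x\in X$ the following holds. Suppose $(l_n)_{n\ge1}$ is a sequence of positive integers with $l_n\to\infty$, $R^g_{x,l_n}>0$ for all $n$, and suppose the functions $\varphi^g_{x,l_n}$ converge uniformly on $[0,1]$ to a continuous function $\varphi$. Then the sequence $(R^g_{x,l_n})_{n\ge1}$ is unbounded.
   Context: For $x\in X$ and an integer $j\ge0$ put $S^g_x(j)=\sum_{k=0}^{j-1}g(T^kx)$ (so $S^g_x(0)=0$), and let $F^g_x:[0,\infty)\to\mathbb R$ be the function that agrees with $S^g_x$ at nonnegative integers and is linear on each interval $[j,j+1]$. For a positive integer $l$ put $R^g_{x,l}=\max_{t\in[0,1]}\big|F^g_x(tl)-tF^g_x(l)\big|$ and, when $R^g_{x,l}>0$, $\varphi^g_{x,l}(t)=\big(F^g_x(tl)-tF^g_x(l)\big)/R^g_{x,l}$, $t\in[0,1]$. If $\varphi^g_{x,l_n}\to\varphi$ uniformly for some sequence $l_n$, the graph of $\varphi$ is called a limiting curve, $(l_n)$ a stabilizing sequence and $(R^g_{x,l_n})$ the normalizing sequence. *)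

(* Defs.v *)
From HB Require Import structures.
From mathcomp Require Import all_boot all_order all_algebra.
From mathcomp Require Import all_classical all_reals all_analysis.
Set Implicit Arguments. Unset Strict Implicit. Unset Printing Implicit Defensive.
Import Order.TTheory GRing.Theory Num.Theory.
Import numFieldNormedType.Exports.
Local Open Scope classical_set_scope.
Local Open Scope ring_scope.

Section Curves.
Context {X : Type} {R : realType}.

Definition birkhoff_sum (T : X -> X) (g : X -> R) (x : X) (j : nat) : R :=
  \sum_(0 <= k < j) g (iter k T x).

(* F^g_x : piecewise-linear interpolation of S^g_x on [0, oo)
   (for s < 0 the value is irrelevant; truncn s = 0 there). *)
Definition birkhoff_interp (T : X -> X) (g : X -> R) (x : X) (s : R) : R :=
  let j := Num.truncn s in
  birkhoff_sum T g x j + (s - j%:R) * g (iter j T x).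

Definition curve_num (T : X -> X) (g : X -> R) (x : X) (l : nat) (t : R) : R :=
  birkhoff_interp T g x (t * l%:R) - t * birkhoff_interp T g x l%:R.

(* R^g_{x,l} = max_{t in [0,1]} |F(tl) - t F(l)| (the max exists: continuous
   function on a compact set), written as the supremum of the image. *)
Definition curve_norm (T : X -> X) (g : X -> R) (x : X) (l : nat) : R :=
  sup [set `|curve_num T g x l t| | t in `[0, 1]].

Definition curve_phi (T : X -> X) (g : X -> R) (x : X) (l : nat) (t : R) : R :=
  curve_num T g x l t / curve_norm T g x l.

End Curves.

(* Main.v *)
Require Import Defs.
From HB Require Import structures.
From mathcomp Require Import all_boot all_order all_algebra.
From mathcomp Require Import all_classical all_reals all_analysis.
From mathcomp Require Import ring lra.
Import Order.TTheory GRing.Theory Num.Theory.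
Import numFieldNormedType.Exports.
Local Open Scope classical_set_scope.
Local Open Scope ring_scope.

Section Det.
Context {X : Type} {R : realType}.
Variables (T : X -> X) (g : X -> R) (x : X).

Lemma truncn_natR (n : nat) : Num.truncn (n%:R : R) = n.
Proof. by apply: truncn_def; rewrite lexx ltr_nat ltnSn. Qed.

Lemma bsumS j : birkhoff_sum T g x j.+1 = birkhoff_sum T g x j + g (iter j T x).
Proof. by rewrite /birkhoff_sum big_nat_recr. Qed.

Lemma bsum0 : birkhoff_sum T g x 0 = 0.
Proof. by rewrite /birkhoff_sum big_geq. Qed.

Lemma interp_nat n : birkhoff_interp T g x n%:R = birkhoff_sum T g x n.
Proof. by rewrite /birkhoff_interp truncn_natR subrr mul0r addr0. Qed.

Lemma num_at (l i : nat) : (0 < l)%N ->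
  curve_num T g x l (i%:R / l%:R) =
  birkhoff_sum T g x i - i%:R / l%:R * birkhoff_sum T g x l.
Proof.
move=> l0; rewrite /curve_num divfK ?pnatr_eq0 -?lt0n // !interp_nat //.
Qed.


Lemma interp_const (c : R) : (forall j, g (iter j T x) = c) ->
  forall s, birkhoff_interp T g x s = s * c.
Proof.
move=> Hc s.
have Hs : forall n, birkhoff_sum T g x n = n%:R * c.
  elim=> [|n IH]; first by rewrite bsum0 mul0r.
  by rewrite bsumS IH Hc -natr1 mulrDl mul1r.
by rewrite /birkhoff_interp Hs Hc -mulrDl addrC subrK.
Qed.

Lemma comb_eq (l j : nat) (Rn : R) : (0 < l)%N -> Rn != 0 ->
  g (iter j T x) - g x =
  Rn * (curve_num T g x l (j.+1%:R / l%:R) / Rn - curve_num T g x l (j%:R / l%:R) / Rn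
        - curve_num T g x l (1%:R / l%:R) / Rn + curve_num T g x l (0%:R / l%:R) / Rn).
Proof.
move=> l0 Rn0; rewrite !num_at // bsumS !bsum0.
have -> : birkhoff_sum T g x 1 = g x by rewrite bsumS bsum0 add0r.
have l0' : (l%:R : R) != 0 by rewrite pnatr_eq0 -lt0n.
rewrite -natr1 /=. field. by rewrite l0' Rn0.
Qed.


Lemma cont0 (phi : R -> R) : {within `[0, 1], continuous phi} ->
  forall e : R, 0 < e -> exists2 d : R, 0 < d & forall t, 0 < t < d -> `|phi 0 - phi t| < e.
Proof.
move=> /(continuous_within_itvP _ ltr01) [_ Hr _] e e0.
move/cvgrPdist_lt: Hr => /(_ e e0) Hn.
apply: contrapT => Hno.
move: Hn; apply/not_near_at_rightP => d.
apply: contrapT => Hd; apply: Hno; exists d%:num => // t Ht.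
apply: contrapT => Hp; apply: Hd; exists t => //; by rewrite add0r.
Qed.

Lemma det_main (l : nat -> nat) (phi : R -> R) :
      (forall n, (0 < l n)%N) ->
      (forall M : nat, exists N : nat, forall n, (N <= n)%N -> (M <= l n)%N) ->
      (forall n, 0 < curve_norm T g x (l n)) ->
      {within `[0, 1], continuous phi} ->
      (forall e : R, 0 < e -> exists N : nat, forall n, (N <= n)%N ->
         forall t : R, t \in `[0, 1] -> `|curve_phi T g x (l n) t - phi t| < e) ->
      ~ (exists M : R, forall n, curve_norm T g x (l n) <= M).
Proof.
move=> lpos lgrow Rpos phic unif [M HM].
have M0 : 0 < M by apply: lt_le_trans (Rpos 0%N) (HM 0%N).
have Hconst : forall j, g (iter j T x) = g x.
  move=> j; apply/eqP; rewrite -subr_eq0 -normr_eq0; apply/negPn/negP => HD.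
  set D := `|g (iter j T x) - g x| in HD.
  have D0 : 0 < D by rewrite lt_def HD normr_ge0.
  have [e e0 Me] : exists2 e : R, 0 < e & M * (4 * e) = D / 2.
    exists (D / (8 * M)); first by rewrite divr_gt0 // mulr_gt0.
    by field; rewrite gt_eqF.
  have [d d0 Hd] := @cont0 phi phic (e / 2) ltac:(by rewrite divr_gt0).
  have [N1 HN1] := unif (e / 2) ltac:(by rewrite divr_gt0).
  set K := maxn (Num.truncn ((j.+1)%:R / d)).+1 j.+1.
  have [N2 HN2] := lgrow K.
  set n := maxn N1 N2.
  have Kl : (K <= l n)%N by apply: HN2; rewrite leq_maxr.
  have ln0 : (0 < l n)%N := lpos n.
  have lnR : (0 : R) < (l n)%:R by rewrite ltr0n.
  have Rn0 := Rpos n.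
  have Hi : forall i, (i <= j.+1)%N ->
     `|curve_phi T g x (l n) (i%:R / (l n)%:R) - phi 0| < e.
    move=> i ij.
    have tin : i%:R / (l n)%:R \in `[(0:R), 1].
      rewrite in_itv /= divr_ge0 ?ler0n //= ler_pdivrMr // mul1r ler_nat.
      by apply: leq_trans ij (leq_trans (leq_maxr _ _) Kl).
    have H1 := HN1 n (leq_maxl _ _) _ tin.
    case: i ij tin H1 => [|i] ij tin H1.
      by rewrite mul0r in H1 *; apply: lt_trans H1 _; rewrite ltr_pdivrMr // ltr_pMr // ltr1n.
    have tlt : i.+1%:R / (l n)%:R < d.
      rewrite ltr_pdivrMr //.
      have h1 : (j.+1%:R / d) < K%:R.
        apply: lt_le_trans (truncnS_gt _) _; rewrite ler_nat leq_maxl //.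
      rewrite ltr_pdivrMr // in h1.
      apply: le_lt_trans (lt_le_trans h1 _).
        by rewrite ler_nat.
      by rewrite mulrC ler_pM2l // ler_nat.
    have H2 := Hd (i.+1%:R / (l n)%:R) ltac:(by rewrite tlt divr_gt0 // ltr0n).
    rewrite (splitr e).
    set t := i.+1%:R / (l n)%:R in H1 H2 *.
    have -> : curve_phi T g x (l n) t - phi 0 = (curve_phi T g x (l n) t - phi t) + (phi t - phi 0) by ring.
    apply: le_lt_trans (ler_normD _ _) _.
    by rewrite ltrD // distrC.
  set Rn := curve_norm T g x (l n) in Rn0.
  pose a := fun i : nat => curve_phi T g x (l n) (i%:R / (l n)%:R).
  have E : g (iter j T x) - g x = Rn * (a j.+1 - a j - a 1%N + a 0%N).
    by apply: comb_eq => //; rewrite gt_eqF.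
  have Ha : forall i, (i <= j.+1)%N -> - e < a i - phi 0 < e.
    by move=> i /Hi; rewrite ltr_norml.
  have Hc : `|a j.+1 - a j - a 1%N + a 0%N| <= 4 * e.
    move/andP: (Ha 0%N isT) => [u0 v0]; move/andP: (Ha 1%N isT) => [u1 v1].
    move/andP: (Ha j (leqnSn j)) => [u2 v2]; move/andP: (Ha j.+1 (leqnn _)) => [u3 v3].
    rewrite ler_norml; apply/andP; split; lra.
  have HDle : D <= M * (4 * e).
    rewrite /D E normrM gtr0_norm //; apply: ler_pM => //; first exact: ltW.
    exact: HM.
  rewrite Me in HDle; lra.
have Hnum : forall t, curve_num T g x (l 0%N) t = 0.
  by move=> t; rewrite /curve_num !(@interp_const _ Hconst) mulrA subrr.
have := Rpos 0%N; rewrite /curve_norm.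
have -> : [set `|curve_num T g x (l 0%N) t| | t in `[(0:R), 1]] = [set 0].
  apply/seteqP; split => [y [t _ <-]|y ->] /=; first by rewrite Hnum normr0.
  by exists 0; [rewrite /= in_itv /= lexx ler01 | rewrite Hnum normr0].
by rewrite sup1 ltxx.
Qed.

End Det.

Theorem mainTheorem1 (d : measure_display) (X : measurableType d) (R : realType)
  (mu : probability X R) (T : X -> X)
  (mT : measurable_fun setT T)
  (Tpres : forall A : set X, measurable A -> mu (T @^-1` A) = mu A)
  (Terg : forall A : set X, measurable A -> T @^-1` A = A ->
            mu A = 0%E \/ mu A = 1%E)
  (g : X -> R) (gint : mu.-integrable setT (EFin \o g)) :
  {ae mu, forall x : X,
    forall (l : nat -> nat) (phi : R -> R),
      (forall n, (0 < l n)%N) ->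
      (forall M : nat, exists N : nat, forall n, (N <= n)%N -> (M <= l n)%N) ->
      (forall n, 0 < curve_norm T g x (l n)) ->
      {within `[0, 1], continuous phi} ->
      (forall e : R, 0 < e -> exists N : nat, forall n, (N <= n)%N ->
         forall t : R, t \in `[0, 1] -> `|curve_phi T g x (l n) t - phi t| < e) ->
      ~ (exists M : R, forall n, curve_norm T g x (l n) <= M)}.
Proof.
apply: aeW => x l phi; exact: det_main.
Qed.
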